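(* Let $\Gamma$ be a ring of loops: vertices $w_1,\dots,w_r$ ($r\ge 2$) arranged cyclically, where each pair of cyclically consecutive vertices $w_j,w_{j+1}$ (indices mod $r$) is joined by two parallel edges of equal length, forming a loop of length $\lambda_j$. Suppose the distinct loop lengths are $L_1,\dots,L_m$, with $L_i$ occurring $n_i$ times, and $L=\sum_j\lambda_j$. Then, with standard vertex conditions, the eigenfrequencies of $\mathbf{L}(\Gamma)$ are $0$ with multiplicity one, $4\pi N/L$ with multiplicity two for each positive integer $N$, and $2\pi N/L_i$ with multiplicity $n_i$ for each $i$ and positive integer $N$ (multiplicities adding when values coincide); equivalently the secular equation is $\Sigma(k)=\left(-1+e^{ikL/2}\right)^2\prod_{i=1}^m\left(-1+e^{iL_ik}\right)^{n_i}$. In particular the spectrum does not depend on the order of the loops around the ring.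
   Context: On each edge the operator is $\mathbf{L}=-\frac{d^2}{dx^2}$ with standard (Neumann–Kirchhoff) vertex conditions: continuity at each vertex and vanishing sum of outward normal derivatives. Eigenvalues are $\lambda=k^2$, $k\ge0$. *)

(* Defs.v *)
From Stdlib Require Import Reals Lra Lia List ClassicalDescription.
From Coquelicot Require Import Coquelicot.
Import ListNotations.
Open Scope R_scope.

(* Ring of loops with r vertices w_0, ..., w_{r-1} (indices mod r).
   Loop j (j < r) joins w_j and w_{(j+1) mod r} by two parallel edges
   (j,true) and (j,false), each of length lam j / 2, so the loop has
   length lam j.  Edge (j,b) is parametrised by x in [0, lam j / 2],
   x = 0 at w_j and x = lam j / 2 at w_{(j+1) mod r}.
   A function on the graph is  f : nat -> bool -> R -> R,  f j b being
   the function on edge (j,b) (only its values on [0, lam j/2] matter). *)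

Definition prev_vertex (r j : nat) : nat := ((j + r - 1) mod r)%nat.

Definition edge_eq (k l : R) (g : R -> R) (d0 d1 : R) : Prop :=
  (forall x, 0 < x < l -> ex_derive g x) /\
  (forall x, 0 < x < l -> is_derive (Derive g) x (- (k ^ 2) * g x)) /\
  filterlim g (at_right 0) (locally (g 0)) /\
  filterlim g (at_left l) (locally (g l)) /\
  filterlim (Derive g) (at_right 0) (locally d0) /\
  filterlim (Derive g) (at_left l) (locally d1).

Definition ring_eigenfun (r : nat) (lam : nat -> R) (k : R)
    (f : nat -> bool -> R -> R) : Prop :=
  exists D0 D1 : nat -> bool -> R,
    (forall j b, (j < r)%nat -> edge_eq k (lam j / 2) (f j b) (D0 j b) (D1 j b)) /\
    (forall j, (j < r)%nat ->
       let p := prev_vertex r j in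
       f j true 0 = f j false 0 /\
       f p true (lam p / 2) = f j true 0 /\
       f p false (lam p / 2) = f j true 0) /\
    (* Kirchhoff: sum of outward normal derivatives at w_j vanishes;
       outward derivative is -f'(0+) at x = 0 and f'(l-) at x = l *)
    (forall j, (j < r)%nat ->
       let p := prev_vertex r j in
       - D0 j true - D0 j false + D1 p true + D1 p false = 0).

Definition lincomb (m : nat) (c : nat -> R) (fs : nat -> nat -> bool -> R -> R)
    (j : nat) (b : bool) (x : R) : R :=
  fold_right Rplus 0 (map (fun i => c i * fs i j b x) (seq 0 m)).

Definition ring_indep (r : nat) (lam : nat -> R) (m : nat)
    (fs : nat -> nat -> bool -> R -> R) : Prop :=
  forall c : nat -> R,
    (forall j b x, (j < r)%nat -> 0 <= x <= lam j / 2 -> lincomb m c fs j b x = 0) ->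
    forall i, (i < m)%nat -> c i = 0.

Definition ring_multiplicity (r : nat) (lam : nat -> R) (k : R) (m : nat) : Prop :=
  (exists fs, (forall i, (i < m)%nat -> ring_eigenfun r lam k (fs i)) /\
              ring_indep r lam m fs) /\
  (forall fs, (forall i, (i < S m)%nat -> ring_eigenfun r lam k (fs i)) ->
              ~ ring_indep r lam (S m) fs).

Definition ind (P : Prop) : nat :=
  if excluded_middle_informative P then 1%nat else 0%nat.

Definition total_length (r : nat) (lam : nat -> R) : R :=
  fold_right Rplus 0 (map lam (seq 0 r)).

(* predicted multiplicity of eigenfrequency k:
   [k = 0] + 2 [k = 4 pi N / L, N >= 1] + sum over loops j of [k = 2 pi N / lam j, N >= 1]
   (summing over loops j is the same as summing n_i over distinct lengths L_i) *)
Definition predicted_mult (r : nat) (lam : nat -> R) (k : R) : nat :=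
  (ind (k = 0%R)
   + 2 * ind (exists N : nat, (1 <= N)%nat /\ (k = 4 * PI * INR N / total_length r lam)%R)
   + list_sum (map (fun j => ind (exists N : nat, (1 <= N)%nat /\ (k = 2 * PI * INR N / lam j)%R))
                   (seq 0 r)))%nat.

(* Main.v *)
Require Import Defs.
From Stdlib Require Import Reals.
From Stdlib Require Import Lra Lia List Classical ZArith ClassicalDescription IndefiniteDescription.
From Coquelicot Require Import Coquelicot.
Import ListNotations.
Open Scope R_scope.

Definition sm (n : nat) (f : nat -> R) : R := fold_right Rplus 0 (map f (seq 0 n)).

Lemma sm_0 f : sm 0 f = 0. Proof. reflexivity. Qed.
Lemma sm_S n f : sm (S n) f = sm n f + f n.
Proof. unfold sm. rewrite seq_S, map_app, fold_right_app. simpl.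
  generalize (map f (seq 0 n)). intro l. induction l; simpl; [lra|]. rewrite IHl. lra. Qed.
Lemma sm_ext n f g : (forall i, (i < n)%nat -> f i = g i) -> sm n f = sm n g.
Proof. induction n; intros H; [reflexivity|]. rewrite !sm_S, IHn, H; [reflexivity|lia|]. intros; apply H; lia. Qed.
Lemma sm_zero n f : (forall i, (i < n)%nat -> f i = 0) -> sm n f = 0.
Proof. induction n; intros H; [reflexivity|]. rewrite sm_S, IHn, H; [lra|lia|]. intros; apply H; lia. Qed.
Lemma sm_plus n f g : sm n (fun i => f i + g i) = sm n f + sm n g.
Proof. induction n; [simpl; unfold sm; simpl; lra|]. rewrite !sm_S, IHn. lra. Qed.
Lemma sm_scal n a f : sm n (fun i => a * f i) = a * sm n f.
Proof. induction n; [unfold sm; simpl; lra|]. rewrite !sm_S, IHn. lra. Qed.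
Lemma sm_minus n f g : sm n (fun i => f i - g i) = sm n f - sm n g.
Proof. induction n; [unfold sm; simpl; lra|]. rewrite !sm_S, IHn. lra. Qed.
Lemma sm_front n f : sm (S n) f = f 0%nat + sm n (fun i => f (S i)).
Proof. induction n. { unfold sm; simpl; lra. } rewrite sm_S, IHn, (sm_S n). lra. Qed.
Lemma sm_one n f i : (i < n)%nat -> (forall i', (i' < n)%nat -> i' <> i -> f i' = 0) -> sm n f = f i.
Proof. induction n; intros Hi H; [lia|]. rewrite sm_S.
  destruct (Nat.eq_dec i n) as [->|Hne].
  - rewrite sm_zero; [lra|]. intros; apply H; lia.
  - rewrite IHn; [rewrite (H n); [lra|lia|lia]|lia|]. intros; apply H; lia. Qed.
Lemma sm_swap n m F : sm n (fun i => sm m (fun j => F i j)) = sm m (fun j => sm n (fun i => F i j)).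
Proof. induction n. { rewrite sm_0, sm_zero; auto. } rewrite sm_S, IHn, <- sm_plus.
  apply sm_ext; intros; rewrite sm_S; reflexivity. Qed.

Definition skip (p l : nat) : nat := if Nat.ltb l p then l else S l.

Lemma sm_skip n p g : (p <= n)%nat -> sm (S n) g = sm n (fun l => g (skip p l)) + g p.
Proof. induction n; intros Hp.
  - assert (p = 0%nat) by lia; subst. unfold sm; simpl; lra.
  - destruct (Nat.eq_dec p (S n)) as [->|Hne].
    + rewrite (sm_S (S n)). f_equal. apply sm_ext. intros i Hi. unfold skip.
      destruct (Nat.ltb_spec i (S n)); [reflexivity|lia].
    + rewrite sm_S, IHn by lia. rewrite (sm_S n).
      replace (skip p n) with (S n) by (unfold skip; destruct (Nat.ltb_spec n p); lia). lra. Qed.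

Lemma elim_lemma : forall m (M : nat -> nat -> R), exists c : nat -> R,
  (exists l, (l <= m)%nat /\ c l <> 0) /\
  forall i, (i < m)%nat -> sm (S m) (fun l => c l * M l i) = 0.
Proof.
  induction m; intros M.
  - exists (fun _ => 1). split; [exists 0%nat; split; [lia|lra]|]. intros; lia.
  - destruct (classic (exists p, (p <= S m)%nat /\ M p m <> 0)) as [[p [Hp Hpm]]|Hno].
    + set (M' := fun l i => M (skip p l) i - M (skip p l) m / M p m * M p i).
      destruct (IHm M') as [c' [[l0 [Hl0 Hc0]] Hc']].
      set (g := - sm (S m) (fun l => c' l * M (skip p l) m) / M p m).
      exists (fun l => if Nat.eqb l p then g else if Nat.ltb l p then c' l else c' (l - 1)%nat).
      assert (Hcs : forall l, (if Nat.eqb (skip p l) p then g else if Nat.ltb (skip p l) p then c' (skip p l) else c' (skip p l - 1)%nat) = c' l).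
      { intro l. unfold skip. destruct (Nat.ltb_spec l p).
        - destruct (Nat.eqb_spec l p); [lia|]. destruct (Nat.ltb_spec l p); [reflexivity|lia].
        - destruct (Nat.eqb_spec (S l) p); [lia|]. destruct (Nat.ltb_spec (S l) p); [lia|]. f_equal; lia. }
      split.
      * exists (skip p l0). split. { unfold skip; destruct (Nat.ltb l0 p); lia. } rewrite Hcs. exact Hc0.
      * intros i Hi. rewrite (sm_skip (S m) p) by lia.
        rewrite (sm_ext _ _ (fun l => c' l * M (skip p l) i)) by (intros; rewrite Hcs; reflexivity).
        rewrite Nat.eqb_refl.
        destruct (Nat.eq_dec i m) as [->|Hne].
        -- unfold g. field. exact Hpm.
        -- assert (Hi' : (i < m)%nat) by lia. specialize (Hc' i Hi'). unfold M' in Hc'.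
           rewrite (sm_ext _ _ (fun l => c' l * M (skip p l) i - (M p i / M p m) * (c' l * M (skip p l) m))) in Hc'.
           2:{ intros; field. exact Hpm. }
           rewrite sm_minus, sm_scal in Hc'. unfold g.
           replace (- sm (S m) (fun l => c' l * M (skip p l) m) / M p m * M p i) with
             (- (M p i / M p m * sm (S m) (fun l => c' l * M (skip p l) m))) by (field; exact Hpm).
           lra.
    + destruct (IHm M) as [c' [[l0 [Hl0 Hc0]] Hc']].
      exists (fun l => if Nat.leb l m then c' l else 0).
      split.
      * exists l0. split; [lia|]. destruct (Nat.leb_spec l0 m); [auto|lia].
      * intros i Hi. rewrite sm_S. destruct (Nat.leb_spec (S m) m); [lia|].
        rewrite (sm_ext _ _ (fun l => c' l * M l i)).
        2:{ intros l Hl. destruct (Nat.leb_spec l m); [reflexivity|lia]. }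
        destruct (Nat.eq_dec i m) as [->|Hne].
        -- rewrite sm_zero; [lra|]. intros l Hl.
           assert (M l m = 0). { apply NNPP; intro Hx; apply Hno; exists l; split; [lia|auto]. }
           rewrite H0; ring.
        -- rewrite Hc'; [lra|lia].
Qed.

Lemma ball_R x e y : ball x e y -> Rabs (y - x) < e.
Proof. intro H. exact H. Qed.

Lemma near_right0 l : 0 < l -> at_right 0 (fun y => 0 < y < l).
Proof. intro Hl. exists (mkposreal l Hl). intros y Hy Hy0. apply ball_R in Hy. simpl in Hy.
  apply Rabs_lt_between' in Hy. lra. Qed.
Lemma near_leftl l : 0 < l -> at_left l (fun y => 0 < y < l).
Proof. intro Hl. exists (mkposreal l Hl). intros y Hy Hy0. apply ball_R in Hy. simpl in Hy.
  apply Rabs_lt_between' in Hy. lra. Qed.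

Lemma lim_plus {T} (F : (T -> Prop) -> Prop) {FF : Filter F} f g a b :
  filterlim f F (locally a) -> filterlim g F (locally b) -> filterlim (fun y => f y + g y) F (locally (a + b)).
Proof. intros Hf Hg. eapply filterlim_comp_2; [exact Hf|exact Hg|]. exact (@filterlim_plus R_AbsRing R_NormedModule a b). Qed.
Lemma lim_mult {T} (F : (T -> Prop) -> Prop) {FF : Filter F} f g a b :
  filterlim f F (locally a) -> filterlim g F (locally b) -> filterlim (fun y => f y * g y) F (locally (a * b)).
Proof. intros Hf Hg. eapply filterlim_comp_2; [exact Hf|exact Hg|]. exact (@filterlim_mult R_AbsRing a b). Qed.
Lemma lim_opp {T} (F : (T -> Prop) -> Prop) {FF : Filter F} f a :
  filterlim f F (locally a) -> filterlim (fun y => - f y) F (locally (- a)).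
Proof. intros Hf. eapply filterlim_comp; [exact Hf|]. exact (@filterlim_opp R_AbsRing R_NormedModule a). Qed.
Lemma lim_minus {T} (F : (T -> Prop) -> Prop) {FF : Filter F} f g a b :
  filterlim f F (locally a) -> filterlim g F (locally b) -> filterlim (fun y => f y - g y) F (locally (a - b)).
Proof. intros Hf Hg. apply lim_plus; auto. apply lim_opp; auto. Qed.

Lemma lim_right_of_deriv (f : R -> R) (f' x : R) : is_derive f x f' -> filterlim f (at_right x) (locally (f x)).
Proof. intro H. apply (filterlim_filter_le_1 (G:=at_right x) (F:=locally x) f (@filter_le_within R (locally x) (@filter_filter _ _ (locally_filter x)) _)).
  apply (ex_derive_continuous (K:=R_AbsRing) (V:=R_NormedModule)). exists f'. exact H. Qed.
Lemma lim_left_of_deriv (f : R -> R) (f' x : R) : is_derive f x f' -> filterlim f (at_left x) (locally (f x)).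
Proof. intro H. apply (filterlim_filter_le_1 (G:=at_left x) (F:=locally x) f (@filter_le_within R (locally x) (@filter_filter _ _ (locally_filter x)) _)).
  apply (ex_derive_continuous (K:=R_AbsRing) (V:=R_NormedModule)). exists f'. exact H. Qed.

Lemma is_derive_eq (f : R -> R) (x d1 d2 : R) : is_derive f x d1 -> d1 = d2 -> is_derive f x d2.
Proof. intros H ->; exact H. Qed.

Lemma const_on (F : R -> R) (l c : R) : 0 < l -> (forall x, 0 < x < l -> is_derive F x 0) ->
  filterlim F (at_right 0) (locally c) -> forall x, 0 < x < l -> F x = c.
Proof.
  intros Hl HF Hlim.
  assert (Hc : forall x y, 0 < x < l -> 0 < y < l -> F x = F y).
  { intros x y Hx Hy. destruct (MVT_gen F x y (fun _ => 0)) as [z [Hz Heq]].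
    - intros z Hz. apply HF. split.
      + eapply Rlt_le_trans; [|apply Rlt_le, Hz]. apply Rmin_glb_lt; lra.
      + eapply Rlt_le_trans; [apply Hz|]. apply Rlt_le, Rmax_lub_lt; lra.
    - intros z Hz. apply continuity_pt_filterlim. apply (ex_derive_continuous (K:=R_AbsRing) (V:=R_NormedModule)). exists 0. apply HF. split.
      + eapply Rlt_le_trans; [|apply Hz]. apply Rmin_glb_lt; lra.
      + eapply Rle_lt_trans; [apply Hz|]. apply Rmax_lub_lt; lra.
    - lra. }
  intros x Hx.
  assert (H2 : filterlim F (at_right 0) (locally (F x))).
  { eapply filterlim_ext_loc. 2: apply filterlim_const.
    eapply filter_imp; [|apply (near_right0 l Hl)]. intros y Hy. simpl. apply Hc; auto. }
  apply (filterlim_locally_unique (K:=R_AbsRing) (V:=R_NormedModule) (F:=at_right 0) (FF:=Proper_StrongProper _ (at_right_proper_filter 0)) F);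
    [exact H2|exact Hlim].
Qed.

Lemma ode_unique (k l : R) (g : R -> R) (d0 d1 : R) (s s' : R -> R) :
  0 < l -> edge_eq k l g d0 d1 ->
  (forall x, is_derive s x (s' x)) -> (forall x, is_derive s' x (-(k^2) * s x)) ->
  s 0 = g 0 -> s' 0 = d0 ->
  (forall x, 0 <= x <= l -> g x = s x) /\ d1 = s' l.
Proof.
  intros Hl [Hex [Hd2 [Hg0 [Hgl [HD0 HD1]]]]] Hs Hs' Hs0 Hs'0.
  set (E := fun y => (Derive g y - s' y) * (Derive g y - s' y) + k^2 * ((g y - s y) * (g y - s y))).
  assert (HE : forall x, 0 < x < l -> E x = 0).
  { apply (const_on E l 0 Hl).
    - intros x Hx. unfold E.
      assert (Hu : is_derive (fun y => Derive g y - s' y) x (-(k^2) * g x - (-(k^2) * s x))).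
      { apply (is_derive_minus (Derive g) s'); auto. }
      assert (Hv : is_derive (fun y => g y - s y) x (Derive g x - s' x)).
      { apply (is_derive_minus g s); auto. apply Derive_correct; auto. }
      eapply is_derive_eq.
      + apply (is_derive_plus (fun y => (Derive g y - s' y) * (Derive g y - s' y))
                  (fun y => k^2 * ((g y - s y) * (g y - s y)))).
        * apply (is_derive_mult (fun y => Derive g y - s' y) (fun y => Derive g y - s' y)); [exact Hu|exact Hu|intros; apply Rmult_comm].
        * apply is_derive_scal. apply (is_derive_mult (fun y => g y - s y) (fun y => g y - s y)); [exact Hv|exact Hv|intros; apply Rmult_comm].
      + unfold plus, mult; simpl. ring.
    - assert (HX : filterlim E (at_right 0) (locally ((d0 - s' 0) * (d0 - s' 0) + k^2 * ((g 0 - s 0) * (g 0 - s 0))))).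
      2:{ replace ((d0 - s' 0) * (d0 - s' 0) + k^2 * ((g 0 - s 0) * (g 0 - s 0))) with 0 in HX by (rewrite Hs0, Hs'0; ring). exact HX. }
      unfold E. apply lim_plus; [apply _| |].
      + apply lim_mult; [apply _| |]; apply lim_minus; try apply _; auto;
          apply (lim_right_of_deriv _ _ _ (Hs' 0)).
      + apply lim_mult; [apply _|apply filterlim_const|].
        apply lim_mult; [apply _| |]; apply lim_minus; try apply _; auto;
          apply (lim_right_of_deriv _ _ _ (Hs 0)). }
  assert (HD : forall x, 0 < x < l -> Derive g x = s' x).
  { intros x Hx. specialize (HE x Hx). unfold E in HE.
    assert (0 <= k^2 * ((g x - s x) * (g x - s x))) by (apply Rmult_le_pos; [apply pow2_ge_0|apply Rle_0_sqr]).
    assert (0 <= (Derive g x - s' x) * (Derive g x - s' x)) by apply Rle_0_sqr.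
    assert (Hz : (Derive g x - s' x) * (Derive g x - s' x) = 0) by lra.
    apply Rmult_integral in Hz. lra. }
  assert (HV : forall x, 0 < x < l -> g x - s x = 0).
  { apply (const_on (fun y => g y - s y) l 0 Hl).
    - intros x Hx. eapply is_derive_eq. apply (is_derive_minus g s); auto.
      apply Derive_correct; auto. rewrite (HD x Hx). unfold minus, plus, opp; simpl. ring.
    - assert (HX : filterlim (fun y => g y - s y) (at_right 0) (locally (g 0 - s 0))).
      { apply lim_minus; [apply _|auto|]. apply (lim_right_of_deriv _ _ _ (Hs 0)). }
      replace (g 0 - s 0) with 0 in HX by lra. exact HX. }
  split.
  - intros x Hx. destruct (Rle_lt_or_eq_dec 0 x (proj1 Hx)) as [H0|Hx0]; [|subst x; auto].
    destruct (Rle_lt_or_eq_dec x l (proj2 Hx)) as [H1|Hxl]; [|subst x].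
    + specialize (HV x (conj H0 H1)). lra.
    + apply (filterlim_locally_unique (K:=R_AbsRing) (V:=R_NormedModule) (F:=at_left l) (FF:=Proper_StrongProper _ (at_left_proper_filter l)) g);
        [exact Hgl|].
      eapply filterlim_ext_loc; [|apply (lim_left_of_deriv _ _ _ (Hs l))].
      eapply filter_imp; [|apply (near_leftl l Hl)]. intros y Hy. specialize (HV y Hy). simpl. lra.
  - apply (filterlim_locally_unique (K:=R_AbsRing) (V:=R_NormedModule) (F:=at_left l) (FF:=Proper_StrongProper _ (at_left_proper_filter l)) (Derive g));
        [exact HD1|].
    eapply filterlim_ext_loc; [|apply (lim_left_of_deriv _ _ _ (Hs' l))].
    eapply filter_imp; [|apply (near_leftl l Hl)]. intros y Hy. simpl. symmetry; apply HD; auto.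
Qed.

Lemma trig_edge k l P Q : edge_eq k l (fun x => P * cos (k * x) + Q * sin (k * x)) (Q * k)
   (- (P * k * sin (k * l)) + Q * k * cos (k * l)).
Proof.
  set (g := fun x => P * cos (k * x) + Q * sin (k * x)).
  set (gd := fun x => - (P * k * sin (k * x)) + Q * k * cos (k * x)).
  assert (Hg : forall x, is_derive g x (gd x)).
  { intro x. unfold g, gd. auto_derive; auto. ring. }
  assert (Hgd : forall x, is_derive gd x (- (k^2) * g x)).
  { intro x. unfold g, gd. auto_derive; auto. ring. }
  assert (HD : forall x, gd x = Derive g x). { intro x; symmetry; apply is_derive_unique, Hg. }
  split; [|split; [|split; [|split; [|split]]]].
  - intros y _. exists (gd y). apply Hg.
  - intros y _. eapply is_derive_ext; [exact HD|]. apply Hgd.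
  - apply (lim_right_of_deriv _ _ _ (Hg 0)).
  - apply (lim_left_of_deriv _ _ _ (Hg l)).
  - replace (Q * k) with (gd 0) by (unfold gd; rewrite Rmult_0_r, sin_0, cos_0; ring).
    eapply filterlim_ext; [exact HD|]. apply (lim_right_of_deriv _ _ _ (Hgd 0)).
  - eapply filterlim_ext; [exact HD|]. apply (lim_left_of_deriv _ _ _ (Hgd l)).
Qed.

Lemma sol_pos k l g d0 d1 : 0 < k -> 0 < l -> edge_eq k l g d0 d1 ->
  (forall x, 0 <= x <= l -> g x = g 0 * cos (k * x) + (d0 / k) * sin (k * x)) /\
  d1 = - (g 0 * k * sin (k * l)) + (d0 / k) * k * cos (k * l).
Proof.
  intros Hk Hl He.
  destruct (ode_unique k l g d0 d1 (fun x => g 0 * cos (k * x) + (d0 / k) * sin (k * x))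
     (fun x => - (g 0 * k * sin (k * x)) + (d0 / k) * k * cos (k * x)) Hl He) as [H1 H2].
  - intro x. auto_derive; auto. ring.
  - intro x. auto_derive; auto. ring.
  - rewrite Rmult_0_r, sin_0, cos_0; ring.
  - rewrite Rmult_0_r, sin_0, cos_0. field. lra.
  - split; auto.
Qed.

Lemma sol_zero l g d0 d1 : 0 < l -> edge_eq 0 l g d0 d1 ->
  (forall x, 0 <= x <= l -> g x = g 0 + d0 * x) /\ d1 = d0.
Proof.
  intros Hl He.
  destruct (ode_unique 0 l g d0 d1 (fun x => g 0 + d0 * x) (fun _ => d0) Hl He) as [H1 H2].
  - intro x. auto_derive; auto. ring.
  - intro x. auto_derive; auto. ring.
  - ring.
  - reflexivity.
  - split; auto.
Qed.

Lemma prev_cases r j : (0 < r)%nat -> (j < r)%nat ->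
  (j = 0%nat /\ prev_vertex r j = (r - 1)%nat) \/ ((1 <= j)%nat /\ prev_vertex r j = (j - 1)%nat).
Proof. intros Hr Hj. unfold prev_vertex. destruct j.
  - left. split; auto. simpl. apply Nat.mod_small. lia.
  - right. split; [lia|]. replace (S j + r - 1)%nat with (j + 1 * r)%nat by lia.
    rewrite Nat.Div0.mod_add. rewrite Nat.mod_small; lia. Qed.

Lemma prev_lt r j : (0 < r)%nat -> (j < r)%nat -> (prev_vertex r j < r)%nat.
Proof. intros. destruct (prev_cases r j) as [[_ ->]|[_ ->]]; lia. Qed.

Lemma total_length_S n lam : total_length (S n) lam = total_length n lam + lam n.
Proof. unfold total_length. rewrite seq_S, map_app, fold_right_app. simpl.
  generalize (map lam (seq 0 n)). intro l. induction l; simpl; [lra|]. rewrite IHl. lra. Qed.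

Definition tt (lam : nat -> R) (j : nat) : R := total_length j lam / 2.

Lemma tt_0 lam : tt lam 0 = 0.
Proof. unfold tt, total_length. simpl. lra. Qed.
Lemma tt_S lam j : tt lam (S j) = tt lam j + lam j / 2.
Proof. unfold tt. rewrite total_length_S. lra. Qed.
Lemma tt_pos lam j : (forall i, (i < j)%nat -> 0 < lam i) -> (1 <= j)%nat -> 0 < tt lam j.
Proof. intros H Hj. induction j; [lia|]. rewrite tt_S. destruct j.
  - rewrite tt_0. specialize (H 0%nat ltac:(lia)). lra.
  - assert (0 < tt lam (S j)) by (apply IHj; [intros; apply H; lia|lia]).
    specialize (H (S j) ltac:(lia)). lra. Qed.

Lemma prev_tt r lam j : (0 < r)%nat -> (j < r)%nat ->
  let p := prev_vertex r j in
  (j = 0%nat /\ tt lam p + lam p / 2 = tt lam j + tt lam r) \/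
  (j <> 0%nat /\ tt lam p + lam p / 2 = tt lam j).
Proof. intros Hr Hj p. destruct (prev_cases r j Hr Hj) as [[-> Hp]|[H1 Hp]]; unfold p; rewrite Hp.
  - left. split; auto. rewrite <- tt_S. replace (S (r - 1)) with r by lia. rewrite tt_0. lra.
  - right. split; [lia|]. rewrite <- tt_S. f_equal. lia. Qed.

Inductive bt := Bc | Bcos | Bsin | Bv (j : nat).

Definition bt_eq_dec (a b : bt) : {a = b} + {a <> b}.
Proof. decide equality. apply Nat.eq_dec. Defined.

Definition Pc (k : R) (lam : nat -> R) (t : bt) (j : nat) (b : bool) : R :=
  match t with
  | Bc => 1
  | Bcos => cos (k * tt lam j)
  | Bsin => sin (k * tt lam j)
  | Bv _ => 0
  end.
Definition Qc (k : R) (lam : nat -> R) (t : bt) (j : nat) (b : bool) : R :=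
  match t with
  | Bc => 0
  | Bcos => - sin (k * tt lam j)
  | Bsin => cos (k * tt lam j)
  | Bv j' => if Nat.eqb j j' then (if b then 1 else -1) else 0
  end.
Definition ev (k : R) (lam : nat -> R) (t : bt) : nat -> bool -> R -> R :=
  fun j b x => Pc k lam t j b * cos (k * x) + Qc k lam t j b * sin (k * x).

Definition cyc (r : nat) (lam : nat -> R) (k : R) : Prop := exists N : nat, (1 <= N)%nat /\ k = 4 * PI * INR N / total_length r lam.
Definition res (lam : nat -> R) (k : R) (j : nat) : Prop := exists N : nat, (1 <= N)%nat /\ k = 2 * PI * INR N / lam j.
Definition opt (P : Prop) (l : list bt) : list bt :=
  if excluded_middle_informative P then l else [].

Definition Bl (r : nat) (lam : nat -> R) (k : R) : list bt :=
  opt (k = 0) [Bc] ++ opt (cyc r lam k) [Bcos; Bsin] ++ flat_map (fun j => opt (res lam k j) [Bv j]) (seq 0 r).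

Lemma length_flat_map (f : nat -> list bt) l : length (flat_map f l) = list_sum (map (fun j => length (f j)) l).
Proof. induction l; simpl; auto. rewrite length_app, IHl. reflexivity. Qed.

Lemma Bl_length r lam k : length (Bl r lam k) = predicted_mult r lam k.
Proof. unfold Bl, predicted_mult. rewrite !length_app, length_flat_map, Nat.add_assoc.
  f_equal; [f_equal|].
  - unfold opt, Defs.ind. destruct (excluded_middle_informative (k = 0)); reflexivity.
  - unfold opt, Defs.ind, cyc. destruct (excluded_middle_informative _); reflexivity.
  - f_equal. apply map_ext. intro j. unfold opt, Defs.ind, res. destruct (excluded_middle_informative _); reflexivity.
Qed.

Lemma Bl_in r lam k t : In t (Bl r lam k) ->
  (t = Bc /\ k = 0) \/ ((t = Bcos \/ t = Bsin) /\ cyc r lam k) \/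
  (exists j, t = Bv j /\ (j < r)%nat /\ res lam k j).
Proof. unfold Bl. rewrite !in_app_iff. intros [H|[H|H]].
  - unfold opt in H. destruct (excluded_middle_informative _); [|destruct H].
    destruct H as [<-|[]]. left; auto.
  - unfold opt in H. destruct (excluded_middle_informative _); [|destruct H].
    right; left. destruct H as [<-|[<-|[]]]; auto.
  - right; right. apply in_flat_map in H. destruct H as [j [Hj H]]. apply in_seq in Hj.
    unfold opt in H. destruct (excluded_middle_informative _); [|destruct H].
    destruct H as [<-|[]]. exists j. split; auto. split; auto. lia. Qed.

Lemma NoDup_fm P a n : NoDup (flat_map (fun j => opt (P j) [Bv j]) (seq a n)).
Proof. revert a; induction n; intro a; simpl; [constructor|].
  unfold opt at 1. destruct (excluded_middle_informative _); simpl; [|apply IHn].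
  constructor; [|apply IHn]. intro H. apply in_flat_map in H. destruct H as [j [Hj H]].
  apply in_seq in Hj. unfold opt in H. destruct (excluded_middle_informative _); [|destruct H].
  destruct H as [H|[]]. inversion H. lia. Qed.

Lemma Bl_NoDup r lam k : NoDup (Bl r lam k).
Proof. unfold Bl. apply NoDup_app; [|apply NoDup_app|].
  - unfold opt; destruct (excluded_middle_informative _); repeat constructor; simpl; tauto.
  - unfold opt; destruct (excluded_middle_informative _); repeat constructor; simpl; try tauto.
    intros [H|[]]; discriminate.
  - apply NoDup_fm.
  - intros a Ha H. unfold opt in Ha. destruct (excluded_middle_informative _); [|destruct Ha].
    apply in_flat_map in H. destruct H as [j [_ H]]. unfold opt in H.
    destruct (excluded_middle_informative _); [|destruct H].
    destruct Ha as [<-|[<-|[]]]; destruct H as [H|[]]; discriminate.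
  - intros a Ha H. unfold opt in Ha. destruct (excluded_middle_informative _); [|destruct Ha].
    destruct Ha as [<-|[]]. apply in_app_iff in H. destruct H as [H|H].
    + unfold opt in H. destruct (excluded_middle_informative _); [|destruct H].
      destruct H as [H|[H|[]]]; discriminate.
    + apply in_flat_map in H. destruct H as [j [_ H]]. unfold opt in H.
      destruct (excluded_middle_informative _); [|destruct H]. destruct H as [H|[]]; discriminate.
Qed.

Lemma sin_zero_pos x : 0 < x -> sin x = 0 -> exists N : nat, (1 <= N)%nat /\ x = INR N * PI.
Proof. intros Hx Hs. destruct (sin_eq_0_0 x Hs) as [z Hz].
  assert (Hz0 : (0 < z)%Z).
  { apply lt_IZR. subst x. pose proof PI_RGT_0. destruct (Rlt_le_dec 0 (IZR z)); auto.
    exfalso. assert (IZR z * PI <= 0) by (apply Rmult_le_0_r; lra). lra. }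
  exists (Z.to_nat z). split; [lia|]. rewrite INR_IZR_INZ, Z2Nat.id by lia. exact Hz. Qed.

Lemma cos_one_pos x : 0 < x -> cos x = 1 -> exists N : nat, (1 <= N)%nat /\ x = 2 * INR N * PI.
Proof. intros Hx Hc. replace x with (2 * (x / 2)) in Hc by field. rewrite cos_2a_sin in Hc.
  assert (Hs : sin (x / 2) = 0) by nra.
  destruct (sin_zero_pos (x / 2)) as [N [HN HxN]]; [lra|auto|]. exists N. split; auto. lra. Qed.

Lemma sin_INR_PI N : sin (INR N * PI) = 0.
Proof. apply sin_eq_0_1. exists (Z.of_nat N). rewrite INR_IZR_INZ. reflexivity. Qed.

Lemma eig_PQ r lam k (P Q : nat -> bool -> R) :
  (forall j, (j < r)%nat ->
    P j true = P j false /\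
    P (prev_vertex r j) true * cos (k * (lam (prev_vertex r j) / 2)) + Q (prev_vertex r j) true * sin (k * (lam (prev_vertex r j) / 2)) = P j true /\
    P (prev_vertex r j) false * cos (k * (lam (prev_vertex r j) / 2)) + Q (prev_vertex r j) false * sin (k * (lam (prev_vertex r j) / 2)) = P j true /\
    - (Q j true * k) - (Q j false * k)
      + (- (P (prev_vertex r j) true * k * sin (k * (lam (prev_vertex r j) / 2))) + Q (prev_vertex r j) true * k * cos (k * (lam (prev_vertex r j) / 2)))
      + (- (P (prev_vertex r j) false * k * sin (k * (lam (prev_vertex r j) / 2))) + Q (prev_vertex r j) false * k * cos (k * (lam (prev_vertex r j) / 2))) = 0) ->
  ring_eigenfun r lam k (fun j b x => P j b * cos (k * x) + Q j b * sin (k * x)).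
Proof.
  intro H.
  exists (fun j b => Q j b * k), (fun j b => - (P j b * k * sin (k * (lam j / 2))) + Q j b * k * cos (k * (lam j / 2))).
  split; [intros; apply trig_edge|]. split.
  - intros j Hj. destruct (H j Hj) as [H1 [H2 [H3 _]]]. cbv zeta.
    rewrite Rmult_0_r, cos_0, sin_0. rewrite H2, H3, H1. split; [ring|split; ring].
  - intros j Hj. destruct (H j Hj) as [_ [_ [_ H4]]]. cbv zeta. exact H4.
Qed.

Lemma cyc_shift r lam k : (0 < r)%nat -> (forall i, (i < r)%nat -> 0 < lam i) -> cyc r lam k ->
  forall j, (j < r)%nat ->
  cos (k * tt lam (prev_vertex r j) + k * (lam (prev_vertex r j) / 2)) = cos (k * tt lam j) /\
  sin (k * tt lam (prev_vertex r j) + k * (lam (prev_vertex r j) / 2)) = sin (k * tt lam j).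
Proof.
  intros Hr Hl [N [HN Hk]] j Hj.
  assert (HL : 0 < total_length r lam).
  { pose proof (tt_pos lam r Hl ltac:(lia)). unfold tt in H. lra. }
  assert (Hkr : k * tt lam r = 2 * INR N * PI).
  { rewrite Hk. unfold tt. field. lra. }
  destruct (prev_tt r lam j Hr Hj) as [[_ Hp]|[_ Hp]]; cbv zeta in Hp;
    rewrite <- Rmult_plus_distr_l, Hp.
  - rewrite Rmult_plus_distr_l, Hkr. split; [apply cos_period|apply sin_period].
  - split; reflexivity.
Qed.

Lemma eig_basis r lam k t : (2 <= r)%nat -> (forall i, (i < r)%nat -> 0 < lam i) -> 0 <= k ->
  In t (Bl r lam k) -> ring_eigenfun r lam k (ev k lam t).
Proof.
  intros Hr Hl Hk Hin. unfold ev.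
  apply eig_PQ. intros j Hj.
  assert (Hp : (prev_vertex r j < r)%nat) by (apply prev_lt; lia).
  destruct (Bl_in r lam k t Hin) as [[-> Hk0]|[[Ht Hc]|[j0 [-> [Hj0 Hres]]]]].
  - simpl. subst k. rewrite !Rmult_0_l, cos_0, sin_0. repeat split; ring.
  - destruct (cyc_shift r lam k ltac:(lia) Hl Hc j Hj) as [Hcs Hsn].
    rewrite cos_plus in Hcs. rewrite sin_plus in Hsn.
    destruct Ht as [->| ->]; simpl; (split; [reflexivity|]).
    + split; [lra|split; [lra|]]. nra.
    + split; [lra|split; [lra|]]. nra.
  - simpl.
    assert (Hs0 : sin (k * (lam j0 / 2)) = 0).
    { destruct Hres as [N [HN Hk']]. pose proof (Hl j0 Hj0).
      replace (k * (lam j0 / 2)) with (INR N * PI) by (rewrite Hk'; field; lra). apply sin_INR_PI. }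
    split; [reflexivity|].
    destruct (Nat.eqb_spec (prev_vertex r j) j0) as [Hpe|Hpe]; destruct (Nat.eqb_spec j j0);
      try (rewrite Hpe in *; rewrite Hs0); repeat split; ring.
Qed.

Definition pt := (R * nat * bool * R)%type.
Definition phi (ps : list pt) (g : nat -> bool -> R -> R) : R :=
  fold_right Rplus 0 (map (fun p : pt => fst (fst (fst p)) * g (snd (fst (fst p))) (snd (fst p)) (snd p)) ps).

Lemma phi_lincomb ps n c fs : phi ps (lincomb n c fs) = sm n (fun i => c i * phi ps (fs i)).
Proof. induction ps as [|p ps IH].
  - unfold phi. simpl. rewrite sm_zero; auto. intros; ring.
  - unfold phi in *. simpl. rewrite IH. unfold lincomb.
    change (fold_right Rplus 0 (map (fun i => c i * fs i (snd (fst (fst p))) (snd (fst p)) (snd p)) (seq 0 n)))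
      with (sm n (fun i => c i * fs i (snd (fst (fst p))) (snd (fst p)) (snd p))).
    rewrite <- sm_scal, <- sm_plus. apply sm_ext. intros; ring. Qed.

Lemma phi_zero r lam ps g : (forall p, In p ps -> (snd (fst (fst p)) < r)%nat /\ 0 <= snd p <= lam (snd (fst (fst p))) / 2) ->
  (forall j b x, (j < r)%nat -> 0 <= x <= lam j / 2 -> g j b x = 0) -> phi ps g = 0.
Proof. intros Hps Hg. induction ps as [|p ps IH]; [reflexivity|].
  unfold phi in *; simpl. rewrite IH by (intros; apply Hps; simpl; auto).
  destruct (Hps p (or_introl eq_refl)). rewrite Hg; auto. ring. Qed.

Definition x0 (k : R) (lam : nat -> R) (j : nat) : R := Rmin (lam j / 2) (PI / (2 * k)).
Definition sn k lam j := sin (k * x0 k lam j).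

Lemma x0_props k lam j : 0 < k -> 0 < lam j -> 0 < x0 k lam j <= lam j / 2 /\ 0 < sn k lam j.
Proof. intros Hk Hl. pose proof PI_RGT_0.
  assert (0 < x0 k lam j) by (apply Rmin_glb_lt; [lra|apply Rdiv_lt_0_compat; lra]).
  split; [split; [auto|apply Rmin_l]|].
  apply sin_gt_0; [nra|]. pose proof (Rmin_r (lam j / 2) (PI / (2 * k))). fold (x0 k lam j) in H1.
  assert (k * x0 k lam j <= k * (PI / (2 * k))) by (apply Rmult_le_compat_l; lra).
  replace (k * (PI / (2 * k))) with (PI / 2) in H2 by (field; lra). lra. Qed.

Definition pts (k : R) (lam : nat -> R) (t : bt) : list pt :=
  match t with
  | Bc | Bcos => [(1, 0%nat, true, 0)]
  | Bsin => [(/ (2 * sn k lam 0), 0%nat, true, x0 k lam 0); (/ (2 * sn k lam 0), 0%nat, false, x0 k lam 0);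
             (- cos (k * x0 k lam 0) / sn k lam 0, 0%nat, true, 0)]
  | Bv j => [(/ (2 * sn k lam j), j, true, x0 k lam j); (- / (2 * sn k lam j), j, false, x0 k lam j)]
  end.

Lemma delta_pos r lam k t t' : 0 < k -> (forall i, (i < r)%nat -> 0 < lam i) -> (0 < r)%nat ->
  In t (Bl r lam k) -> In t' (Bl r lam k) ->
  phi (pts k lam t) (ev k lam t') = if bt_eq_dec t t' then 1 else 0.
Proof.
  intros Hk Hl Hr Ht Ht'.
  assert (Hnc : forall t, In t (Bl r lam k) -> t <> Bc).
  { intros u Hu ->. destruct (Bl_in r lam k Bc Hu) as [[_ H]|[[[H|H] _]|[j [H _]]]]; try discriminate; lra. }
  pose proof (Hnc t Ht) as Hn1. pose proof (Hnc t' Ht') as Hn2.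
  assert (Hv : forall j, In (Bv j) (Bl r lam k) -> (j < r)%nat).
  { intros j Hj. destruct (Bl_in r lam k _ Hj) as [[H _]|[[[H|H] _]|[j' [H [H' _]]]]]; try discriminate.
    inversion H; subst; auto. }
  destruct (x0_props k lam 0 Hk (Hl 0%nat Hr)) as [_ Hs0].
  destruct (bt_eq_dec t t') as [He|He].
  - subst t'. unfold phi, pts, ev, Pc, Qc.
    destruct t as [| | |j]; [congruence| | |]; simpl; rewrite ?tt_0, ?Rmult_0_r, ?cos_0, ?sin_0.
    + field.
    + unfold sn in *. field. lra.
    + destruct (x0_props k lam j Hk (Hl j (Hv j Ht))) as [_ Hsj]. unfold sn in *.
      rewrite Nat.eqb_refl. field. lra.
  - unfold phi, pts, ev, Pc, Qc.
    destruct t as [| | |j]; [congruence| | |]; destruct t' as [| | |j']; try congruence; simpl;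
      rewrite ?tt_0, ?Rmult_0_r, ?cos_0, ?sin_0.
    + field.
    + destruct j'; field.
    + unfold sn in *. field. lra.
    + unfold sn in *. destruct j'; field; lra.
    + destruct (x0_props k lam j Hk (Hl j (Hv j Ht))) as [_ Hsj]. unfold sn in *. field. lra.
    + destruct (x0_props k lam j Hk (Hl j (Hv j Ht))) as [_ Hsj]. unfold sn in *. field. lra.
    + destruct (x0_props k lam j Hk (Hl j (Hv j Ht))) as [_ Hsj]. unfold sn in *.
      destruct (Nat.eqb_spec j j'); [subst; congruence|]. field. lra.
Qed.

Lemma cyc_pos r lam k : (2 <= r)%nat -> (forall i, (i < r)%nat -> 0 < lam i) -> cyc r lam k -> 0 < k.
Proof. intros Hr Hl [N [HN Hk]]. pose proof (tt_pos lam r Hl ltac:(lia)). unfold tt in H.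
  pose proof PI_RGT_0. assert (1 <= INR N) by (apply (le_INR 1); auto). rewrite Hk.
  apply Rdiv_lt_0_compat; nra. Qed.
Lemma res_pos lam k j : 0 < lam j -> res lam k j -> 0 < k.
Proof. intros Hl [N [HN Hk]]. pose proof PI_RGT_0. assert (1 <= INR N) by (apply (le_INR 1); auto). rewrite Hk.
  apply Rdiv_lt_0_compat; nra. Qed.

Lemma Bl_zero r lam : (2 <= r)%nat -> (forall i, (i < r)%nat -> 0 < lam i) -> forall t, In t (Bl r lam 0) -> t = Bc.
Proof. intros Hr Hl t Ht. destruct (Bl_in r lam 0 t Ht) as [[-> _]|[[_ Hc]|[j [_ [Hj Hres]]]]]; auto.
  - pose proof (cyc_pos r lam 0 Hr Hl Hc). lra.
  - pose proof (res_pos lam 0 j (Hl j Hj) Hres). lra. Qed.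

Lemma delta_all r lam k t t' : 0 <= k -> (2 <= r)%nat -> (forall i, (i < r)%nat -> 0 < lam i) ->
  In t (Bl r lam k) -> In t' (Bl r lam k) ->
  phi (pts k lam t) (ev k lam t') = if bt_eq_dec t t' then 1 else 0.
Proof. intros Hk Hr Hl Ht Ht'. destruct (Rle_lt_or_eq_dec 0 k Hk) as [Hk'|Hk'].
  - apply (delta_pos r); auto. lia.
  - subst k. rewrite (Bl_zero r lam Hr Hl t Ht), (Bl_zero r lam Hr Hl t' Ht').
    destruct (bt_eq_dec Bc Bc); [|congruence]. unfold phi, pts, ev, Pc, Qc. simpl.
    rewrite Rmult_0_l, cos_0. ring. Qed.

Lemma pts_dom r lam k t p : 0 <= k -> (2 <= r)%nat -> (forall i, (i < r)%nat -> 0 < lam i) ->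
  In t (Bl r lam k) -> In p (pts k lam t) ->
  (snd (fst (fst p)) < r)%nat /\ 0 <= snd p <= lam (snd (fst (fst p))) / 2.
Proof. intros Hk Hr Hl Ht Hp.
  assert (H0 : 0 <= 0 <= lam 0%nat / 2) by (pose proof (Hl 0%nat ltac:(lia)); lra).
  destruct (Bl_in r lam k t Ht) as [[-> _]|[[[-> | ->] Hc]|[j [-> [Hj Hres]]]]]; simpl in Hp.
  - destruct Hp as [<-|[]]. simpl. split; [lia|auto].
  - destruct Hp as [<-|[]]. simpl. split; [lia|auto].
  - pose proof (cyc_pos r lam k Hr Hl Hc) as Hk'.
    destruct (x0_props k lam 0 Hk' (Hl 0%nat ltac:(lia))) as [Hx _].
    destruct Hp as [<-|[<-|[<-|[]]]]; simpl; (split; [lia|lra]).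
  - pose proof (res_pos lam k j (Hl j Hj) Hres) as Hk'.
    destruct (x0_props k lam j Hk' (Hl j Hj)) as [Hx _].
    destruct Hp as [<-|[<-|[]]]; simpl; (split; [lia|lra]).
Qed.

Lemma basis_indep r lam k : 0 <= k -> (2 <= r)%nat -> (forall i, (i < r)%nat -> 0 < lam i) ->
  ring_indep r lam (length (Bl r lam k)) (fun i => ev k lam (nth i (Bl r lam k) Bc)).
Proof.
  intros Hk Hr Hl c Hc i Hi.
  set (L := Bl r lam k) in *.
  assert (HtL : In (nth i L Bc) L) by (apply nth_In; auto).
  assert (H0 : phi (pts k lam (nth i L Bc)) (lincomb (length L) c (fun i => ev k lam (nth i L Bc))) = 0).
  { apply (phi_zero r lam). - intros p Hp. apply (pts_dom r lam k (nth i L Bc)); auto.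
    - intros j b x Hj Hx. apply Hc; auto. }
  rewrite phi_lincomb in H0.
  rewrite (sm_one _ _ i Hi) in H0.
  - cbv beta in H0. rewrite (delta_all r lam k _ _ Hk Hr Hl HtL HtL) in H0.
    destruct (bt_eq_dec _ _); [lra|congruence].
  - intros i' Hi' Hne. cbv beta. rewrite (delta_all r lam k _ _ Hk Hr Hl HtL (nth_In _ _ Hi')).
    destruct (bt_eq_dec _ _) as [He|He]; [|ring].
    exfalso. apply Hne. apply (proj1 (NoDup_nth L Bc) (Bl_NoDup r lam k)); auto.
Qed.

Definition sumL (g : bt -> R) (l : list bt) : R := fold_right Rplus 0 (map g l).

Lemma sumL_app g l1 l2 : sumL g (l1 ++ l2) = sumL g l1 + sumL g l2.
Proof. induction l1; unfold sumL in *; simpl; [lra|]. rewrite IHl1. lra. Qed.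

Lemma sumL_nth g L d : sumL g L = sm (length L) (fun i => g (nth i L d)).
Proof. induction L as [|a L IH]; [reflexivity|]. simpl length. rewrite sm_front. unfold sumL in *. simpl.
  rewrite IH. reflexivity. Qed.

Lemma sumL_fm g (P : nat -> Prop) n :
  sumL g (flat_map (fun j => opt (P j) [Bv j]) (seq 0 n)) =
  sm n (fun j => if excluded_middle_informative (P j) then g (Bv j) else 0).
Proof. induction n; [reflexivity|]. rewrite seq_S, flat_map_app, sumL_app, IHn, sm_S. f_equal.
  simpl. unfold opt. destruct (excluded_middle_informative (P n)); unfold sumL; simpl; lra. Qed.

Lemma next_exists r p : (0 < r)%nat -> (p < r)%nat -> exists j, (j < r)%nat /\ prev_vertex r j = p.
Proof. intros Hr Hp. destruct (Nat.lt_ge_cases (S p) r).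
  - exists (S p). split; auto. destruct (prev_cases r (S p) Hr H) as [[H1 _]|[_ ->]]; lia.
  - exists 0%nat. split; [lia|]. destruct (prev_cases r 0 Hr Hr) as [[_ ->]|[H1 _]]; lia. Qed.

Lemma upper r lam k (L : list bt) :
  (forall f, ring_eigenfun r lam k f -> exists cf : bt -> R, forall j b x, (j < r)%nat -> 0 <= x <= lam j / 2 ->
      f j b x = sumL (fun t => cf t * ev k lam t j b x) L) ->
  forall fs, (forall i, (i < S (length L))%nat -> ring_eigenfun r lam k (fs i)) ->
  ~ ring_indep r lam (S (length L)) fs.
Proof.
  intros Hrep fs Hfs Hind.
  assert (Hex : forall i, exists cf : bt -> R, (i < S (length L))%nat -> forall j b x, (j < r)%nat -> 0 <= x <= lam j / 2 ->
      fs i j b x = sumL (fun t => cf t * ev k lam t j b x) L).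
  { intro i. destruct (Nat.lt_ge_cases i (S (length L))) as [Hi|Hi].
    - destruct (Hrep (fs i) (Hfs i Hi)) as [cf Hcf]. exists cf. intros _. exact Hcf.
    - exists (fun _ => 0). intros; lia. }
  set (CF := fun i => proj1_sig (constructive_indefinite_description _ (Hex i))).
  assert (HCF : forall i, (i < S (length L))%nat -> forall j b x, (j < r)%nat -> 0 <= x <= lam j / 2 ->
      fs i j b x = sumL (fun t => CF i t * ev k lam t j b x) L).
  { intro i. exact (proj2_sig (constructive_indefinite_description _ (Hex i))). }
  set (m := length L) in *.
  destruct (elim_lemma m (fun l i => CF l (nth i L Bc))) as [c [[l0 [Hl0 Hc0]] Hc]].
  apply Hc0. apply Hind; [|lia]. intros j b x Hj Hx.
  unfold lincomb. change (sm (S m) (fun i => c i * fs i j b x) = 0).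
  rewrite (sm_ext _ _ (fun l => sm m (fun i => (c l * CF l (nth i L Bc)) * ev k lam (nth i L Bc) j b x))).
  2:{ intros l Hl. rewrite HCF by auto. rewrite (sumL_nth _ _ Bc). rewrite <- sm_scal. apply sm_ext. intros; ring. }
  rewrite sm_swap. apply sm_zero. intros i Hi.
  rewrite (sm_ext _ _ (fun l => ev k lam (nth i L Bc) j b x * (c l * CF l (nth i L Bc)))) by (intros; ring).
  rewrite sm_scal, Hc by auto. ring.
Qed.

Lemma opt_false P l : ~ P -> opt P l = [].
Proof. intro H. unfold opt. destruct (excluded_middle_informative P); tauto. Qed.
Lemma opt_true P l : P -> opt P l = l.
Proof. intro H. unfold opt. destruct (excluded_middle_informative P); tauto. Qed.

Lemma rep_pos r lam k f : 0 < k -> (2 <= r)%nat -> (forall i, (i < r)%nat -> 0 < lam i) ->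
  ring_eigenfun r lam k f ->
  exists cf : bt -> R, forall j b x, (j < r)%nat -> 0 <= x <= lam j / 2 ->
      f j b x = sumL (fun t => cf t * ev k lam t j b x) (Bl r lam k).
Proof.
  intros Hk Hr Hl [D0 [D1 [Hedge [Hcont Hkir]]]].
  assert (Hr0 : (0 < r)%nat) by lia.
  assert (Hsol : forall j b, (j < r)%nat ->
     (forall x, 0 <= x <= lam j / 2 -> f j b x = f j b 0 * cos (k * x) + (D0 j b / k) * sin (k * x)) /\
     D1 j b = - (f j b 0 * k * sin (k * (lam j / 2))) + (D0 j b / k) * k * cos (k * (lam j / 2))).
  { intros j b Hj. apply sol_pos; auto. pose proof (Hl j Hj); lra. }
  set (al := fun j => f j true 0).
  set (be := fun j => (D0 j true + D0 j false) / 2 / k).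
  set (w := fun j => (D0 j true - D0 j false) / (2 * k)).
  assert (F1 : forall j, (j < r)%nat -> f j false 0 = al j).
  { intros j Hj. destruct (Hcont j Hj) as [H1 _]. unfold al. auto. }
  assert (Fv : forall j, (j < r)%nat ->
     let p := prev_vertex r j in
     al j = al p * cos (k * (lam p / 2)) + be p * sin (k * (lam p / 2)) /\
     be j = - (al p * sin (k * (lam p / 2))) + be p * cos (k * (lam p / 2)) /\
     w p * sin (k * (lam p / 2)) = 0).
  { intros j Hj p. assert (Hp : (p < r)%nat) by (apply prev_lt; auto).
    destruct (Hcont j Hj) as [_ [H2 H3]]. fold p in H2, H3.
    pose proof (Hkir j Hj) as HK. cbv zeta in HK. fold p in HK.
    destruct (Hsol p true Hp) as [Ht Ht1]. destruct (Hsol p false Hp) as [Hf Hf1].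
    assert (Hx : 0 <= lam p / 2 <= lam p / 2) by (pose proof (Hl p Hp); lra).
    rewrite (Ht _ Hx) in H2. rewrite (Hf _ Hx), (F1 p Hp) in H3. fold (al p) in H2. rewrite Ht1, Hf1, (F1 p Hp) in HK.
    fold (al p) in HK. fold (al j) in H2, H3.
    split; [|split].
    - unfold be. replace (al j) with (((al p * cos (k * (lam p / 2)) + D0 p true / k * sin (k * (lam p / 2))) +
         (al p * cos (k * (lam p / 2)) + D0 p false / k * sin (k * (lam p / 2)))) / 2) by lra.
      field. lra.
    - unfold be. replace (D0 j true + D0 j false) with
         (- (al p * k * sin (k * (lam p / 2))) + D0 p true / k * k * cos (k * (lam p / 2)) +
          (- (al p * k * sin (k * (lam p / 2))) + D0 p false / k * k * cos (k * (lam p / 2)))) by lra.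
      field. lra.
    - unfold w. replace ((D0 p true - D0 p false) / (2 * k) * sin (k * (lam p / 2))) with
        (((al p * cos (k * (lam p / 2)) + D0 p true / k * sin (k * (lam p / 2))) -
          (al p * cos (k * (lam p / 2)) + D0 p false / k * sin (k * (lam p / 2)))) / 2) by (field; lra).
      lra. }
  set (A := al 0%nat). set (Bb := be 0%nat).
  assert (Hind : forall j, (j < r)%nat -> al j = A * cos (k * tt lam j) + Bb * sin (k * tt lam j) /\
                                         be j = - (A * sin (k * tt lam j)) + Bb * cos (k * tt lam j)).
  { induction j; intro Hj.
    - rewrite tt_0, Rmult_0_r, cos_0, sin_0. unfold A, Bb. split; ring.
    - destruct IHj as [IH1 IH2]; [lia|].
      destruct (Fv (S j) Hj) as [G1 [G2 _]].
      destruct (prev_cases r (S j) Hr0 Hj) as [[H1 _]|[_ Hp]]; [lia|].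
      replace (S j - 1)%nat with j in Hp by lia. rewrite Hp in G1, G2.
      rewrite tt_S, Rmult_plus_distr_l, cos_plus, sin_plus. rewrite G1, G2, IH1, IH2. split; ring. }
  assert (Hwrap : A = A * cos (k * tt lam r) + Bb * sin (k * tt lam r) /\
                  Bb = - (A * sin (k * tt lam r)) + Bb * cos (k * tt lam r)).
  { destruct (Fv 0%nat Hr0) as [G1 [G2 _]].
    destruct (prev_cases r 0 Hr0 Hr0) as [[_ Hp]|[H1 _]]; [|lia]. rewrite Hp in G1, G2.
    destruct (Hind (r - 1)%nat ltac:(lia)) as [IH1 IH2].
    assert (Htr : tt lam r = tt lam (r - 1) + lam (r - 1)%nat / 2).
    { rewrite <- tt_S. f_equal. lia. }
    rewrite Htr, Rmult_plus_distr_l, cos_plus, sin_plus. fold A Bb in G1, G2.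
    split; [rewrite G1 at 1|rewrite G2 at 1]; rewrite IH1, IH2; ring. }
  assert (HAB : ~ cyc r lam k -> A = 0 /\ Bb = 0).
  { intro Hnc. destruct (Req_dec (A * A + Bb * Bb) 0) as [H0|H0].
    { pose proof (Rle_0_sqr A). pose proof (Rle_0_sqr Bb). unfold Rsqr in *.
      assert (HA : A * A = 0) by lra. assert (HB : Bb * Bb = 0) by lra.
      apply Rmult_integral in HA. apply Rmult_integral in HB. split; [destruct HA|destruct HB]; auto. }
    exfalso. apply Hnc. destruct Hwrap as [W1 W2].
    assert (Htr : 0 < tt lam r) by (apply tt_pos; auto; lia).
    assert (Hc1 : cos (k * tt lam r) = 1).
    { assert (Hz : (A * A + Bb * Bb) * (1 - cos (k * tt lam r)) = 0).
      { replace ((A * A + Bb * Bb) * (1 - cos (k * tt lam r))) with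
          (A * (A - (A * cos (k * tt lam r) + Bb * sin (k * tt lam r))) + Bb * (Bb - (- (A * sin (k * tt lam r)) + Bb * cos (k * tt lam r)))) by ring.
        rewrite <- W1, <- W2. ring. }
      apply Rmult_integral in Hz. destruct Hz; [contradiction|lra]. }
    destruct (cos_one_pos (k * tt lam r)) as [N [HN HkN]]; [nra|auto|].
    exists N. split; auto. unfold tt in HkN. unfold tt in Htr.
    apply (Rmult_eq_reg_r (total_length r lam / 2)); [|lra]. rewrite HkN. field. lra. }
  assert (Hw : forall j, (j < r)%nat -> ~ res lam k j -> w j = 0).
  { intros j Hj Hnr. destruct (next_exists r j Hr0 Hj) as [j' [Hj' Hpj]].
    destruct (Fv j' Hj') as [_ [_ G3]]. rewrite Hpj in G3.
    apply Rmult_integral in G3. destruct G3 as [G3|G3]; auto.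
    exfalso. apply Hnr. pose proof (Hl j Hj).
    destruct (sin_zero_pos (k * (lam j / 2))) as [N [HN HkN]]; [nra|auto|].
    exists N. split; auto. apply (Rmult_eq_reg_r (lam j / 2)); [|lra]. rewrite HkN. field. lra. }
  exists (fun t => match t with Bc => 0 | Bcos => A | Bsin => Bb | Bv j => w j end).
  intros j b x Hj Hx.
  unfold Bl. rewrite opt_false by lra. simpl app. rewrite sumL_app, sumL_fm.
  assert (Hcy : sumL (fun t => match t with Bc => 0 | Bcos => A | Bsin => Bb | Bv j => w j end * ev k lam t j b x)
                     (opt (cyc r lam k) [Bcos; Bsin]) = A * ev k lam Bcos j b x + Bb * ev k lam Bsin j b x).
  { destruct (classic (cyc r lam k)) as [Hc|Hc].
    - rewrite opt_true by auto. unfold sumL; simpl. ring.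
    - rewrite opt_false by auto. destruct (HAB Hc) as [-> ->]. unfold sumL; simpl. ring. }
  rewrite Hcy.
  rewrite (sm_ext _ _ (fun j' => w j' * ev k lam (Bv j') j b x)).
  2:{ intros j' Hj'. destruct (excluded_middle_informative (res lam k j')); [reflexivity|].
      rewrite Hw by auto. ring. }
  rewrite (sm_one _ _ j Hj).
  2:{ intros j' Hj' Hne. unfold ev, Pc, Qc. destruct (Nat.eqb_spec j j'); [congruence|]. ring. }
  destruct (Hsol j b Hj) as [Hs _]. rewrite (Hs x Hx).
  destruct (Hind j Hj) as [I1 I2].
  unfold ev, Pc, Qc. rewrite Nat.eqb_refl.
  assert (HD : D0 j b / k = be j + (if b then 1 else -1) * w j).
  { unfold be, w. destruct b; field; lra. }
  rewrite HD, I2. destruct b.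
  - change (f j true 0) with (al j). rewrite I1. ring.
  - rewrite (F1 j Hj), I1. ring.
Qed.

Lemma Bl_zero_eq r lam : (2 <= r)%nat -> (forall i, (i < r)%nat -> 0 < lam i) -> Bl r lam 0 = [Bc].
Proof. intros Hr Hl. unfold Bl. rewrite opt_true by reflexivity.
  rewrite opt_false. 2:{ intro Hc. pose proof (cyc_pos r lam 0 Hr Hl Hc). lra. }
  simpl. f_equal. assert (Hg : forall a n, (a + n <= r)%nat -> flat_map (fun j => opt (res lam 0 j) [Bv j]) (seq a n) = []).
  { intros a n; revert a; induction n; intros a Han; [reflexivity|]. simpl. rewrite opt_false.
    - apply IHn. lia.
    - intro Hres. pose proof (res_pos lam 0 a (Hl a ltac:(lia)) Hres). lra. }
  apply Hg. lia. Qed.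

Lemma rep_zero r lam f : (2 <= r)%nat -> (forall i, (i < r)%nat -> 0 < lam i) ->
  ring_eigenfun r lam 0 f ->
  exists cf : bt -> R, forall j b x, (j < r)%nat -> 0 <= x <= lam j / 2 ->
      f j b x = sumL (fun t => cf t * ev 0 lam t j b x) (Bl r lam 0).
Proof.
  intros Hr Hl [D0 [D1 [Hedge [Hcont Hkir]]]].
  assert (Hr0 : (0 < r)%nat) by lia.
  assert (Hsol : forall j b, (j < r)%nat ->
     (forall x, 0 <= x <= lam j / 2 -> f j b x = f j b 0 + D0 j b * x) /\ D1 j b = D0 j b).
  { intros j b Hj. apply sol_zero; auto. pose proof (Hl j Hj); lra. }
  set (al := fun j => f j true 0).
  assert (F1 : forall j, (j < r)%nat -> f j false 0 = al j).
  { intros j Hj. destruct (Hcont j Hj) as [H1 _]. unfold al. auto. }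
  assert (Fv : forall j, (j < r)%nat ->
     let p := prev_vertex r j in
     al j = al p + D0 p true * (lam p / 2) /\ D0 p true = D0 p false /\ D0 j true = D0 p true).
  { intros j Hj p. assert (Hp : (p < r)%nat) by (apply prev_lt; auto).
    destruct (Hcont j Hj) as [H1 [H2 H3]]. fold p in H2, H3.
    pose proof (Hkir j Hj) as HK. cbv zeta in HK. fold p in HK.
    destruct (Hsol p true Hp) as [Ht Ht1]. destruct (Hsol p false Hp) as [Hf Hf1].
    assert (Hx : 0 <= lam p / 2 <= lam p / 2) by (pose proof (Hl p Hp); lra).
    rewrite (Ht _ Hx) in H2. rewrite (Hf _ Hx), (F1 p Hp) in H3. fold (al p) in H2. rewrite Ht1, Hf1 in HK.
    fold (al j) in H2, H3.
    assert (Hpp : D0 p true = D0 p false).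
    { pose proof (Hl p Hp). apply (Rmult_eq_reg_r (lam p / 2)); lra. }
    split; [lra|split; auto].
    destruct (next_exists r j Hr0 Hj) as [j' [Hj' Hpj]].
    destruct (Hcont j' Hj') as [_ [G2 G3]]. rewrite Hpj in G2, G3.
    destruct (Hsol j true Hj) as [Gt _]. destruct (Hsol j false Hj) as [Gf _].
    assert (Hxj : 0 <= lam j / 2 <= lam j / 2) by (pose proof (Hl j Hj); lra).
    rewrite (Gt _ Hxj) in G2. rewrite (Gf _ Hxj), (F1 j Hj) in G3. fold (al j) in G2.
    assert (Hjj : D0 j true = D0 j false).
    { pose proof (Hl j Hj). apply (Rmult_eq_reg_r (lam j / 2)); lra. }
    lra. }
  set (A := al 0%nat). set (d := D0 0%nat true).
  assert (Hind : forall j, (j < r)%nat -> al j = A + d * tt lam j /\ D0 j true = d).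
  { induction j; intro Hj.
    - rewrite tt_0. unfold A, d. split; ring.
    - destruct IHj as [IH1 IH2]; [lia|].
      destruct (Fv (S j) Hj) as [G1 [_ G3]].
      destruct (prev_cases r (S j) Hr0 Hj) as [[H1 _]|[_ Hp]]; [lia|].
      replace (S j - 1)%nat with j in Hp by lia. rewrite Hp in G1, G3.
      rewrite tt_S. rewrite G1, G3, IH1, IH2. split; ring. }
  assert (Hd0 : d = 0).
  { destruct (Fv 0%nat Hr0) as [G1 _].
    destruct (prev_cases r 0 Hr0 Hr0) as [[_ Hp]|[H1 _]]; [|lia]. rewrite Hp in G1.
    destruct (Hind (r - 1)%nat ltac:(lia)) as [IH1 IH2].
    assert (Htr : tt lam r = tt lam (r - 1) + lam (r - 1)%nat / 2).
    { rewrite <- tt_S. f_equal. lia. }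
    assert (Htp : 0 < tt lam r) by (apply tt_pos; auto; lia).
    fold A in G1. rewrite IH1, IH2 in G1.
    assert (Hz : d * tt lam r = 0) by (rewrite Htr; lra).
    apply Rmult_integral in Hz. destruct Hz; [auto|lra]. }
  exists (fun t => match t with Bc => A | _ => 0 end).
  intros j b x Hj Hx.
  rewrite (Bl_zero_eq r lam Hr Hl). unfold sumL, ev, Pc, Qc. simpl.
  rewrite Rmult_0_l, cos_0.
  destruct (Hsol j b Hj) as [Hs _]. rewrite (Hs x Hx).
  destruct (Hind j Hj) as [I1 I2].
  destruct (Fv j Hj) as [_ [_ _]].
  assert (HDb : D0 j b = 0).
  { destruct (next_exists r j Hr0 Hj) as [j' [Hj' Hpj]].
    destruct (Fv j' Hj') as [_ [G2 _]]. rewrite Hpj in G2. destruct b; lra. }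
  rewrite HDb. destruct b.
  - change (f j true 0) with (al j). rewrite I1, Hd0. ring.
  - rewrite (F1 j Hj), I1, Hd0. ring.
Qed.

Theorem mainTheorem7 (r : nat) (lam : nat -> R) :
  (2 <= r)%nat ->
  (forall j, (j < r)%nat -> 0 < lam j) ->
  forall k : R, 0 <= k ->
    ring_multiplicity r lam k (predicted_mult r lam k).
Proof.
  intros Hr Hl k Hk. rewrite <- Bl_length. split.
  - exists (fun i => ev k lam (nth i (Bl r lam k) Bc)). split.
    + intros i Hi. apply eig_basis; auto. apply nth_In; auto.
    + apply basis_indep; auto.
  - apply upper. intros f Hf. destruct (Rle_lt_or_eq_dec 0 k Hk) as [Hk'|Hk'].
    + apply rep_pos; auto.
    + subst k. apply rep_zero; auto.
Qed.
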